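(* Let $Y$ be a real Hilbert space, let $T\colon Y\to Y$ be a bounded linear operator that is bijective, let $\lambda>0$, and suppose that $\langle x, Tx\rangle+\lambda\|Tx\|^2\le 0$ for all $x\in Y$. Then for every maximally monotone multifunction $M\colon Y\rightrightarrows Y$, the multifunction $MT$ (given by $y\mapsto M(Ty)$) has a unique fixed point, i.e. there is exactly one $y\in Y$ with $y\in M(Ty)$. *)

(* Defs.v *)
From HB Require Import structures.
From mathcomp Require Import all_boot all_order all_algebra.
From mathcomp Require Import all_classical all_reals all_analysis.
Set Implicit Arguments. Unset Strict Implicit. Unset Printing Implicit Defensive.
Import Order.TTheory GRing.Theory Num.Theory.
Import numFieldNormedType.Exports.
Local Open Scope classical_set_scope.
Local Open Scope ring_scope.

(* ip is a (real) inner product on Y whose induced norm is the norm of Y.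
   Together with Y : completeNormedModType R this makes Y a real Hilbert space. *)
Definition is_inner_product (R : realType) (Y : normedModType R)
  (ip : Y -> Y -> R) : Prop :=
  [/\ (forall x y, ip x y = ip y x),
      (forall (a : R) (x y z : Y), ip (a *: x + y) z = a * ip x z + ip y z)
    & (forall x, ip x x = `|x| ^+ 2)].

Definition bounded_linear (R : realType) (Y : normedModType R) (T : Y -> Y) : Prop :=
  (forall (a : R) (x y : Y), T (a *: x + y) = a *: T x + T y) /\ continuous T.

Definition monotone_mf (R : realType) (Y : normedModType R)
  (ip : Y -> Y -> R) (M : Y -> set Y) : Prop :=
  forall x y u v, M x u -> M y v -> 0 <= ip (x - y) (u - v).

Definition maximally_monotone (R : realType) (Y : normedModType R)
  (ip : Y -> Y -> R) (M : Y -> set Y) : Prop :=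
  monotone_mf ip M /\
  forall M' : Y -> set Y, monotone_mf ip M' ->
    (forall x, M x `<=` M' x) -> forall x, M' x = M x.

(* Main.v *)
Require Import Defs.
From HB Require Import structures.
From mathcomp Require Import all_boot all_order all_algebra.
From mathcomp Require Import all_classical all_reals all_analysis.
Import Order.TTheory GRing.Theory Num.Theory.
Import numFieldNormedType.Exports.
Local Open Scope classical_set_scope.
Local Open Scope ring_scope.
From mathcomp Require Import lra ring.
Set Implicit Arguments. Unset Strict Implicit. Unset Printing Implicit Defensive.

Section IP.
Variables (R : realType) (Y : normedModType R) (ip : Y -> Y -> R).
Hypothesis hip : is_inner_product ip.

Lemma ipC x y : ip x y = ip y x.
Proof. by case: hip. Qed.
Lemma ipxx x : ip x x = `|x| ^+ 2.
Proof. by case: hip. Qed.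
Lemma ipDZl a x y z : ip (a *: x + y) z = a * ip x z + ip y z.
Proof. by case: hip. Qed.
Lemma ip0l z : ip 0 z = 0.
Proof.
have := ipDZl 1 0 0 z; rewrite scaler0 addr0 mul1r => H.
lra.
Qed.
Lemma ipDl x y z : ip (x + y) z = ip x z + ip y z.
Proof. by rewrite -[x in LHS]scale1r ipDZl mul1r. Qed.
Lemma ipZl a x z : ip (a *: x) z = a * ip x z.
Proof. by rewrite -[a *: x]addr0 ipDZl ip0l addr0. Qed.
Lemma ipNl x z : ip (- x) z = - ip x z.
Proof. by rewrite -scaleN1r ipZl mulN1r. Qed.
Lemma ipBl x y z : ip (x - y) z = ip x z - ip y z.
Proof. by rewrite ipDl ipNl. Qed.
Lemma ip0r z : ip z 0 = 0.
Proof. by rewrite ipC ip0l. Qed.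
Lemma ipDr x y z : ip z (x + y) = ip z x + ip z y.
Proof. by rewrite ipC ipDl !(ipC z). Qed.
Lemma ipZr a x z : ip z (a *: x) = a * ip z x.
Proof. by rewrite ipC ipZl ipC. Qed.
Lemma ipNr x z : ip z (- x) = - ip z x.
Proof. by rewrite ipC ipNl ipC. Qed.
Lemma ipBr x y z : ip z (x - y) = ip z x - ip z y.
Proof. by rewrite ipDr ipNr. Qed.

Definition ipE := (ipDl, ipBl, ipNl, ipZl, ipDr, ipBr, ipNr, ipZr, ip0l, ip0r).

Lemma ip_ge0 x : 0 <= ip x x.
Proof. by rewrite ipxx sqr_ge0. Qed.

Lemma CS x y : ip x y <= `|x| * `|y|.
Proof.
have [->|x0] := eqVneq x 0; first by rewrite ip0l normr0 mul0r.
have [->|y0] := eqVneq y 0; first by rewrite ip0r normr0 mulr0.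
have := ip_ge0 (`|y| *: x - `|x| *: y).
rewrite !ipE !ipxx (ipC y x).
have nx : 0 < `|x| by rewrite normr_gt0.
have ny : 0 < `|y| by rewrite normr_gt0.
move=> H.
have H2 : 0 <= 2 * (`|x| * `|y|) * (`|x| * `|y| - ip x y) by nra.
rewrite pmulr_rge0 in H2; first by rewrite subr_ge0 in H2.
by apply: mulr_gt0 => //; apply: mulr_gt0.
Qed.

Lemma CSabs x y : `|ip x y| <= `|x| * `|y|.
Proof.
rewrite ler_norml CS andbT.
have := CS (- x) y; rewrite ipNl normrN; lra.
Qed.

End IP.

Section IL.
Variables (R : realType) (Y : completeNormedModType R) (ip : Y -> Y -> R).
Hypothesis hip : is_inner_product ip.
Variable G : Y -> Y -> Prop.
Hypothesis Gmono : forall x1 u1 x2 u2, G x1 u1 -> G x2 u2 -> 0 <= ip (x1 - x2) (u1 - u2).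

Inductive inC : Y -> Y -> R -> Prop :=
| inC_gen x u : G x u -> inC x u (ip x u)
| inC_comb X1 U1 p1 X2 U2 p2 t : 0 <= t -> t <= 1 -> inC X1 U1 p1 -> inC X2 U2 p2 ->
   inC ((1-t) *: X1 + t *: X2) ((1-t) *: U1 + t *: U2) ((1-t) * p1 + t * p2).

Let ipE := ipE hip.
Let ipC := ipC hip.
Let ipxx := ipxx hip.

Lemma inv_gen x u X U p : G x u -> inC X U p -> ip x U + ip X u <= ip x u + p.
Proof.
move=> Gxu; elim=> [x' u' Gx' | X1 U1 p1 X2 U2 p2 t t0 t1 _ IH1 _ IH2].
- have := Gmono Gxu Gx'; rewrite !ipE (ipC x' u); lra.
- rewrite !ipE; nra.
Qed.

Lemma inv2 X1 U1 p1 X2 U2 p2 : inC X1 U1 p1 -> inC X2 U2 p2 ->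
  ip X1 U2 + ip X2 U1 <= p1 + p2.
Proof.
move=> h; elim: h X2 U2 p2 => [x u Gxu | X1' U1' p1' X2' U2' p2' t t0 t1 _ IH1 _ IH2]
  X2 U2 p2 h2.
- exact: inv_gen.
- have := IH1 _ _ _ h2; have := IH2 _ _ _ h2; rewrite !ipE; nra.
Qed.

Definition dd (X U : Y) : Y := 2^-1 *: (X - U).
Definition Phi X U p := - `|dd X U| ^+ 2 - p.

Lemma Phi_le0 X U p : inC X U p -> Phi X U p <= 0.
Proof.
move=> h; have := inv2 h h; rewrite /Phi /dd -ipxx.
have := ip_ge0 hip (X + U); rewrite !ipE (ipC U X); nra.
Qed.

Lemma d_comb X1 U1 X2 U2 t :
  dd ((1-t) *: X1 + t *: X2) ((1-t) *: U1 + t *: U2) = (1-t) *: dd X1 U1 + t *: dd X2 U2.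
Proof.
rewrite /dd !scalerBr !scalerDr !scalerA (mulrC (1-t)) (mulrC t).
rewrite opprD addrACA; done.
Qed.

Lemma normcomb (a b : Y) (t : R) : `|(1-t) *: a + t *: b| ^+ 2 =
  (1-t) * `|a| ^+ 2 + t * `|b| ^+ 2 - t * (1-t) * `|a - b| ^+ 2.
Proof. rewrite -!ipxx !ipE (ipC b a); ring. Qed.

Lemma gen_id (z x u : Y) : ip (z - x) (z + u) = `|z - dd x u| ^+ 2 - `|dd x u| ^+ 2 - ip x u.
Proof. rewrite -!ipxx /dd !ipE (ipC u x) (ipC u z) (ipC x z); by field. Qed.

End IL.


Lemma inv_mono (R : realType) (n m : nat) : (n <= m)%N -> (m.+1%:R : R)^-1 <= (n.+1%:R)^-1.
Proof. by move=> h; rewrite lef_pV2 ?posrE ?ltr0Sn // ler_nat ltnS. Qed.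

Lemma inv_pos (R : realType) (n : nat) : 0 < (n.+1%:R : R)^-1.
Proof. by rewrite invr_gt0 ltr0Sn. Qed.

Lemma small_inv (R : realType) (e : R) : 0 < e -> exists N : nat, forall n, (N <= n)%N -> (n.+1%:R)^-1 <= e.
Proof.
move=> e0; exists (Num.trunc e^-1) => n Nn.
apply: le_trans (inv_mono _ Nn) _.
rewrite -[e in _ <= e]invrK lef_pV2 ?posrE ?ltr0Sn ?invr_gt0 //.
exact/ltW/truncnS_gt.
Qed.

Section IL2.
Variables (R : realType) (Y : completeNormedModType R) (ip : Y -> Y -> R).
Hypothesis hip : is_inner_product ip.
Variable G : Y -> Y -> Prop.
Hypothesis Gmono : forall x1 u1 x2 u2, G x1 u1 -> G x2 u2 -> 0 <= ip (x1 - x2) (u1 - u2).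

Lemma Phi_comb (X1 U1 : Y) (p1 : R) (X2 U2 : Y) (p2 t : R) :
  Phi ((1 - t) *: X1 + t *: X2) ((1 - t) *: U1 + t *: U2) ((1 - t) * p1 + t * p2) =
  (1 - t) * Phi X1 U1 p1 + t * Phi X2 U2 p2 + t * (1 - t) * `|dd X1 U1 - dd X2 U2| ^+ 2.
Proof. rewrite /Phi d_comb (normcomb hip); ring. Qed.

Lemma IL0 : exists z, forall x u, G x u -> ip (z - x) (z + u) <= 0.
Proof.
have [[x0 [u0 G0]]|nG] := pselect (exists x u, G x u); last first.
  by exists 0 => x u Gxu; exfalso; apply: nG; exists x, u.
pose P := [set r : R | exists X U p, inC ip G X U p /\ r = Phi X U p].
have P0 : P (Phi x0 u0 (ip x0 u0)).
  by exists x0, u0, (ip x0 u0); split => //; exact: inC_gen.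
have ubP : ubound P 0.
  by move=> r [X [U [p [h ->]]]]; exact: (Phi_le0 hip Gmono).
have hsP : has_sup P by split; [exists (Phi x0 u0 (ip x0 u0)) | exists 0].
set S := sup P.
have S_le0 : S <= 0 by apply: ge_sup => //; exists (Phi x0 u0 (ip x0 u0)).
have Pup : forall X U p, inC ip G X U p -> Phi X U p <= S.
  by move=> X U p h; apply: sup_upper_bound => //; exists X, U, p.
have adh : forall n : nat, exists c : Y * Y * R,
    inC ip G c.1.1 c.1.2 c.2 /\ S - (n.+1%:R)^-1 < Phi c.1.1 c.1.2 c.2.
  move=> n; have [r [X [U [p [h ->]]]] hr] := sup_adherent (inv_pos R n) hsP.
  by exists (X, U, p).
have [c Hc] := choice adh.
pose dn n := dd (c n).1.1 (c n).1.2.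
have key : forall n m, `|dn n - dn m| ^+ 2 <= 2 * ((n.+1%:R)^-1 + (m.+1%:R)^-1).
  move=> n m.
  have t0 : (0:R) <= 2^-1 by lra.
  have t1 : (2^-1:R) <= 1 by lra.
  have := Pup _ _ _ (inC_comb t0 t1 (Hc n).1 (Hc m).1); rewrite Phi_comb.
  have := (Hc n).2; have := (Hc m).2; rewrite -/(dn n) -/(dn m).
  move=> h1 h2 h3. set i := (n.+1%:R)^-1 in h2 *. set j := (m.+1%:R)^-1 in h1 *. clearbody i j. lra.
have cv : cvg (dn @ \oo).
  suff : cauchy (dn @ \oo) by exact: cauchy_cvg.
  suff : cauchy_ex (dn @ \oo) by exact: cauchy_exP.
  move=> e e0; rewrite /fmapE -ball_normE /ball_.
  have e8 : 0 < e ^+ 2 / 8 by apply: divr_gt0 => //; apply: exprn_gt0.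
  have [N HN] := small_inv e8.
  exists (dn N), N => // m Nm /=.
  have := key N m; have := HN N (leqnn N); have := HN m Nm.
  set i := (N.+1%:R)^-1; set j := (m.+1%:R)^-1; clearbody i j => hm hN hk.
  have a0 : 0 <= `|dn N - dn m| by [].
  nra.
move: cv; rewrite cvg_ex /= => -[z Hz].
have Hz' := (cvgrPdist_lt _ _).1 Hz.
exists z => x u Gxu.
rewrite (gen_id hip).
set dg := dd x u.
have bnd : forall n, `|dn n - dg| <= 2 + `|dn 0 - dg|.
  move=> n; have := key n 0; have := inv_mono R (leq0n n).
  rewrite invr1; set i := (n.+1%:R)^-1; clearbody i => hi hk.
  have h2 : `|dn n - dn 0| <= 2.
    have a0 : 0 <= `|dn n - dn 0| by [].
    nra.
  have := ler_distD (dn 0) (dn n) dg; lra.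
set B := 2 + `|dn 0 - dg|.
have B2 : 2 <= B by rewrite /B; have : 0 <= `|dn 0 - dg| by []; lra.
rewrite leNgt; apply/negP => E0.
set E := `|z - dg| ^+ 2 - `|dg| ^+ 2 - ip x u in E0.
have B0 : 0 < 4 * B ^+ 2 by nra.
pose t := Num.min 1 (E / (4 * B ^+ 2)).
have t0 : 0 < t by rewrite lt_min ltr01 divr_gt0.
have t1 : t <= 1 by rewrite ge_min lexx.
have tB : t * B ^+ 2 <= E / 4.
  have : t <= E / (4 * B ^+ 2) by rewrite ge_min lexx orbT.
  rewrite ler_pdivlMr // => h; lra.
have Hg : forall n, t * (`|dn n - dg| ^+ 2 + Phi x u (ip x u)) <=
    (n.+1%:R)^-1 + t * (t * `|dn n - dg| ^+ 2).
  move=> n.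
  have := Pup _ _ _ (inC_comb (ltW t0) t1 (Hc n).1 (@inC_gen _ _ ip G _ _ Gxu)).
  rewrite Phi_comb -/(dn n) -/dg.
  have := (Hc n).2; have := inv_pos R n.
  set i := (n.+1%:R)^-1; set Pn := Phi (c n).1.1 _ _; set Pg := Phi x u _.
  set D := `|dn n - dg| ^+ 2; clearbody i Pn Pg D => i0 hn hc.
  have h1 : (1 - t) * (S - i) <= (1 - t) * Pn by rewrite ler_wpM2l ?subr_ge0 // ltW.
  have h2 : t * S <= 0 by rewrite pmulr_rle0.
  have h3 : (1 - t) * i <= i by nra.
  nra.
have d0 : 0 < Num.min 1 (E / (4 * (2 * B + 1))).
  by rewrite lt_min ltr01 divr_gt0 //; nra.
have [N1 _ HN1] := Hz' _ _ d0.
have tE : 0 < t * E / 4 by apply: divr_gt0 => //; apply: mulr_gt0.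
have [N2 HN2] := small_inv tE.
pose n := maxn N1 N2.
have hd := HN1 n (leq_maxl N1 N2); have hi := HN2 n (leq_maxr N1 N2).
have hg := Hg n; have hb := bnd n.
move: hd hi hg hb; rewrite -/B /=.
set i := (n.+1%:R)^-1; set dl := `|z - dn n|; set a := `|dn n - dg|.
set Pg := Phi x u (ip x u).
have PgE : Pg = - `|dg| ^+ 2 - ip x u by [].
have tri : `|z - dg| <= dl + a by apply: ler_distD.
have dl0 : 0 <= dl by rewrite /dl. have a0 : 0 <= a by rewrite /a.
clearbody i dl a Pg => hd hi hg hb.
have hd1 : dl < 1 by move: hd; rewrite lt_min => /andP[].
have hd2 : dl < E / (4 * (2 * B + 1)) by move: hd; rewrite lt_min => /andP[].
have hd3 : dl * (2 * B + 1) <= E / 4.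
  by move: hd2; rewrite ltr_pdivlMr; [lra | nra].
have aB : a ^+ 2 <= B ^+ 2 by nra.
have hta : t * a ^+ 2 <= E / 4 by nra.
have hP : a ^+ 2 + Pg <= E / 2.
  have : t * (a ^+ 2 + Pg) <= t * (E / 2) by nra.
  by rewrite ler_pM2l.
have hz : `|z - dg| ^+ 2 <= a ^+ 2 + dl * (2 * B + 1).
  have z0 : 0 <= `|z - dg| by [].
  have h1 : `|z - dg| ^+ 2 <= (dl + a) ^+ 2 by rewrite ler_pXn2r // ?nnegrE; lra.
  have h2 : dl * a <= dl * B by rewrite ler_wpM2l.
  have h3 : dl * dl <= dl * 1 by rewrite ler_wpM2l // ltW.
  nra.
have EE : E = `|z - dg| ^+ 2 + Pg by rewrite /E PgE; lra.
clearbody E; lra.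
Qed.
End IL2.

Section Bound.
Variables (R : realType) (Y : completeNormedModType R) (ip : Y -> Y -> R) (S : Y -> Y).
Hypothesis hip : is_inner_product ip.
Hypothesis Slin : forall a x y, S (a *: x + y) = a *: S x + S y.
Hypothesis Sneg : forall h, ip (S h) h <= 0.

Let ipE := ipE hip.
Let ipC := ipC hip.
Let ipxx := ipxx hip.

Lemma S0 : S 0 = 0.
Proof.
have := Slin 1 0 0; rewrite scaler0 addr0 scale1r => h.
by apply/(addrI (S 0)); rewrite addr0 -h.
Qed.

Lemma SZ a x : S (a *: x) = a *: S x.
Proof. by rewrite -[a *: x]addr0 Slin S0 addr0. Qed.

Lemma SD x y : S (x + y) = S x + S y.
Proof. by rewrite -[x in LHS]scale1r Slin scale1r. Qed.

Lemma SN x : S (- x) = - S x.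
Proof. by rewrite -scaleN1r SZ scaleN1r. Qed.

Lemma SB x y : S (x - y) = S x - S y.
Proof. by rewrite SD SN. Qed.

Lemma E_fin x (y : Y) : `|y| <= 1 -> ip (S y) (y - x) <= `|S x| * (1 + `|x|).
Proof.
move=> y1.
have e : ip (S y) (y - x) = ip (S x) (y - x) + ip (S (y - x)) (y - x).
  by rewrite SB !ipE; ring.
rewrite e; have := Sneg (y - x); have := CS hip (S x) (y - x).
have := ler_normB y x; have : 0 <= `|S x| by [].
move=> h0 h1 h2 h3.
have h4 : `|S x| * `|y - x| <= `|S x| * (1 + `|x|).
  by rewrite ler_wpM2l //; lra.
lra.
Qed.

Lemma S_bounded : exists L, 0 < L /\ forall y, `|S y| <= L * `|y|.
Proof.
pose E (n : nat) := [set x : Y | forall y, `|y| <= 1 -> ip (S y) (y - x) <= n%:R].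
pose O n := ~` E n.
have finE : forall x, exists n, E n x.
  move=> x; exists (Num.trunc (`|S x| * (1 + `|x|))).+1 => y y1.
  apply: (le_trans (E_fin x y1)); exact/ltW/truncnS_gt.
have openO : forall n, open (O n).
  move=> n; rewrite openE => x /= Ox.
  have [y [y1 hy]] : exists y, `|y| <= 1 /\ n%:R < ip (S y) (y - x).
    have Ox' : ~ (forall y, `|y| <= 1 -> ip (S y) (y - x) <= n%:R) := Ox.
    move/existsNP: Ox' => [y]; move/not_implyP => [y1 hy].
    by move/negP: hy; rewrite -ltNge => h; exists y.
  apply/nbhs_ballP.
  have g0 : 0 < ip (S y) (y - x) - n%:R by rewrite subr_gt0.
  have sy1 : 0 < `|S y| + 1 by have := normr_ge0 (S y); lra.
  exists ((ip (S y) (y - x) - n%:R) / (`|S y| + 1)); first exact: divr_gt0.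
  move=> x'; rewrite -ball_normE /ball_ /= => hx.
  move=> /(_ y y1); apply/negP; rewrite -ltNge.
  have e : ip (S y) (y - x') = ip (S y) (y - x) + ip (S y) (x - x') by rewrite !ipE; ring.
  rewrite e; have := CSabs hip (S y) (x - x').
  rewrite ltr_pdivlMr // in hx.
  have : 0 <= `|x - x'| by [].
  rewrite ler_norml => h0 /andP[h1 h2].
  move: hx h0 h1 h2; set a := ip (S y) (y - x); set b := ip (S y) (x - x').
  set c := `|x - x'|; set d := `|S y|; clearbody a b c d => *; nra.
have notall : ~ (forall n, dense (O n)).
  move=> hd.
  have := @Baire R Y O (fun n => conj (openO n) (hd n)).
  move=> /(_ setT) [] ; [by exists 0 | exact: openT |].
  move=> x [_ Hx]; have [n Hn] := finE x; exact: (Hx n Logic.I Hn).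
have [n Hn] : exists n, ~ dense (O n).
  apply: contrapT => h; apply: notall => n; apply: contrapT => hn; apply: h; exists n.
  exact: hn.
have [D [[x0 Dx0] [oD hD]]] : exists D : set Y, D !=set0 /\ open D /\ ~ (D `&` O n !=set0).
  move: Hn; rewrite /dense => /existsNP [D /not_implyP [D0 /not_implyP [oD hD]]].
  by exists D.
have DE : forall x, D x -> E n x.
  move=> x Dx; apply: contrapT => nE; apply: hD; exists x; split => //.
have [r r0 Br] : exists2 r : R, 0 < r & forall x, `|x0 - x| < r -> E n x.
  have := oD; rewrite openE => /(_ x0 Dx0) /nbhs_ballP [r r0 Hr].
  exists r => // x hx; apply: DE; apply: Hr; rewrite -ball_normE /ball_ /=; exact: hx.
have [m Em] := finE (- x0).
pose K : R := n%:R + m%:R.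
have K0 : 0 <= K by rewrite /K addr_ge0.
have C1 : forall y h, `|y| <= 1 -> `|h| < r -> - ip (S y) h <= K + 2 * (- ip (S y) y).
  move=> y h y1 hr.
  have h1 : E n (x0 + h) by apply: Br; rewrite opprD addrA subrr add0r normrN.
  have := h1 y y1; have := Em y y1; rewrite /K !ipE; lra.
pose s := Num.min r 1 / 2.
have mr0 : 0 < Num.min r 1 by rewrite lt_min r0 ltr01.
have s0 : 0 < s by rewrite /s divr_gt0.
have sr : s < r.
  have : Num.min r 1 <= r by rewrite ge_min lexx.
  rewrite /s; lra.
have s1 : s <= 1 / 2.
  have : Num.min r 1 <= 1 by rewrite ge_min lexx orbT.
  rewrite /s; lra.
have C2 : forall y, `|y| <= 1 -> - ip (S y) y <= 8 * K / s ^+ 2.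
  move=> y y1.
  have t0 : 0 <= s / 4 by apply: divr_ge0; lra.
  have n1 : `|(s / 4) *: y| <= 1 by rewrite normrZ ger0_norm //; nra.
  have n2 : `|s *: y| < r by rewrite normrZ gtr0_norm //; nra.
  have := C1 _ _ n1 n2.
  rewrite SZ !ipE => h.
  rewrite ler_pdivlMr; last exact: exprn_gt0.
  move: h; set q := ip (S y) y; clearbody q => h.
  nra.
have C3 : forall y, `|y| <= 1 -> `|S y| <= (K + 16 * K / s ^+ 2) / s.
  move=> y y1.
  have KK : 0 <= K + 16 * K / s ^+ 2.
    by apply: addr_ge0 => //; apply: divr_ge0; [apply: mulr_ge0 | apply: sqr_ge0].
  have [Sy0|Syn0] := eqVneq (S y) 0.
    by rewrite Sy0 normr0; apply: divr_ge0 => //; exact: ltW.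
  have nS : 0 < `|S y| by rewrite normr_gt0.
  have n2 : `|- (s / `|S y|) *: S y| < r.
    rewrite normrZ normrN ger0_norm ?divfK ?gt_eqF //.
    exact: divr_ge0 (ltW s0) (ltW nS).
  have := C1 y _ y1 n2.
  rewrite (ipZr hip) ipxx mulNr opprK => h.
  have e : s / `|S y| * `|S y| ^+ 2 = s * `|S y|.
    by rewrite expr2 mulrA divfK // gt_eqF.
  rewrite e in h; rewrite ler_pdivlMr //.
  have := C2 y y1.
  have e2 : 16 * K / s ^+ 2 = 2 * (8 * K / s ^+ 2) by ring.
  rewrite e2; move: h; set q := ip (S y) y; set w := 8 * K / s ^+ 2.
  clearbody q w => h1 h2; nra.
pose L0 := (K + 16 * K / s ^+ 2) / s.
have L00 : 0 <= L0.
  apply: divr_ge0; last exact: ltW.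
  by apply: addr_ge0 => //; apply: divr_ge0; [apply: mulr_ge0 | apply: sqr_ge0].
exists (L0 + 1); split; first by lra.
move=> y; have [->|y0] := eqVneq y 0; first by rewrite S0 !normr0 mulr0.
have ny : 0 < `|y| by rewrite normr_gt0.
have n1 : `|(`|y|^-1) *: y| <= 1.
  by rewrite normrZ normfV normr_id mulVf // gt_eqF.
have := C3 _ n1.
rewrite SZ normrZ normfV normr_id ler_pdivrMl // => h.
have : `|y| * L0 <= (L0 + 1) * `|y| by nra.
rewrite -/L0 in h; exact: le_trans h.
Qed.

End Bound.

Unset Implicit Arguments.

Theorem lemma2p9 (R : realType) (Y : completeNormedModType R)
  (ip : Y -> Y -> R) (T : Y -> Y) (lambda : R) :
  is_inner_product ip ->
  bounded_linear T ->
  bijective T ->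
  0 < lambda ->
  (forall x : Y, ip x (T x) + lambda * `|T x| ^+ 2 <= 0) ->
  forall M : Y -> set Y, maximally_monotone ip M ->
    exists! y : Y, M (T y) y.
Proof.
move=> hip [Tlin Tcont] [S TS ST] lam0 Hineq M [Mmono Mmax].
have Slin : forall a x y, S (a *: x + y) = a *: S x + S y.
  by move=> a x y; apply: (can_inj TS); rewrite Tlin !ST.
have Sstr : forall h, ip (S h) h + lambda * `|h| ^+ 2 <= 0.
  by move=> h; have := Hineq (S h); rewrite ST.
have Sneg : forall h, ip (S h) h <= 0.
  move=> h; have := Sstr h; have : 0 <= lambda * `|h| ^+ 2.
    by rewrite mulr_ge0 // ?ltW // sqr_ge0.
  lra.
have [L [L0 HL]] := S_bounded hip Slin Sneg.
pose L1 := L + lambda.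
have L10 : 0 < L1 by rewrite /L1; lra.
have lamL : lambda <= L1 by rewrite /L1; lra.
have HL1 : forall y, `|S y| <= L1 * `|y|.
  move=> y; apply: (le_trans (HL y)); rewrite ler_wpM2r //; rewrite /L1; lra.
pose gam := lambda / L1 ^+ 2.
have gam0 : 0 < gam by rewrite /gam divr_gt0 // exprn_gt0.
have res : forall b, exists z, M z (gam^-1 *: (b - z)).
  move=> b.
  pose G x u := exists v, M x v /\ u = gam *: v - b.
  have Gmono : forall x1 u1 x2 u2, G x1 u1 -> G x2 u2 -> 0 <= ip (x1 - x2) (u1 - u2).
    move=> x1 u1 x2 u2 [v1 [M1 ->]] [v2 [M2 ->]].
    rewrite opprB addrA subrK -scalerBr (ipZr hip).
    exact: mulr_ge0 (ltW gam0) (Mmono _ _ _ _ M1 M2).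
  have [z Hz] := IL0 hip Gmono.
  exists z.
  pose w := gam^-1 *: (b - z).
  have Hz' : forall x v, M x v -> 0 <= ip (z - x) (w - v).
    move=> x v Mxv; have := Hz x (gam *: v - b) (ex_intro _ v (conj Mxv erefl)).
    rewrite /w !(ipDr hip) ?(ipNr hip) !(ipZr hip) ?(ipDr hip) ?(ipNr hip).
    have gi : gam^-1 * gam = 1 by rewrite mulVf // gt_eqF.
    have gi0 : 0 < gam^-1 by rewrite invr_gt0.
    set a := ip (z - x) z; set c := ip (z - x) v; set d := ip (z - x) b.
    clearbody a c d; set g := gam^-1 in gi gi0 *; clearbody g => h.
    have e : g * (gam * c) = c by rewrite mulrA gi mul1r.
    have h2 := ler_wpM2l (ltW gi0) h.
    rewrite mulr0 !mulrDr e mulrN in h2.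
    rewrite mulrBr; lra.
  pose M' x v := M x v \/ (x = z /\ v = w).
  have M'mono : monotone_mf ip M'.
    move=> x1 y1 u1 v1 [Mxu|[-> ->]] [Myv|[-> ->]].
    - exact: Mmono.
    - rewrite -(opprB z x1) -(opprB w u1) (ipNl hip) (ipNr hip) opprK; exact: Hz'.
    - exact: Hz'.
    - by rewrite subrr (ip0l hip).
  have := Mmax M' M'mono (fun x v Mxv => or_introl Mxv) z.
  move=> e; have h : M' z w by right.
  by rewrite e in h.
pose J b := projT1 (cid (res b)).
have HJ : forall b, M (J b) (gam^-1 *: (b - J b)) := fun b => projT2 (cid (res b)).
have gi0 : 0 < gam^-1 by rewrite invr_gt0.
have Jlip : forall b1 b2, `|J b1 - J b2| <= `|b1 - b2|.
  move=> b1 b2; have := Mmono _ _ _ _ (HJ b1) (HJ b2).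
  have hcs := CS hip (J b1 - J b2) (b1 - b2).
  have hdd := ipxx hip (J b1 - J b2).
  move: hcs hdd; set d := J b1 - J b2.
  have ed : ip d d = ip d (J b1) - ip d (J b2) by rewrite {2}/d (ipBr hip).
  rewrite ed !(ipBr hip) !(ipZr hip) -mulrBr pmulr_rge0 // !(ipBr hip) => hcs hdd h.
  have d0 : 0 <= `|d| by [].
  have e0 : 0 <= `|b1 - b2| by [].
  move: hcs hdd h d0 e0; set p1 := ip d b1; set p2 := ip d b2; set p3 := ip d (J b1).
  set p4 := ip d (J b2); set nd := `|d|; set nb := `|b1 - b2|.
  clearbody p1 p2 p3 p4 nd nb => hcs hdd h d0 e0; nra.
pose kappa := lambda / L1.
have k0 : 0 < kappa by rewrite /kappa divr_gt0.
have k1 : kappa <= 1 by rewrite /kappa ler_pdivrMr // mul1r.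
pose q := 1 - kappa ^+ 2 / 2.
have q0 : 0 <= q by rewrite /q; nra.
have q1 : q < 1 by rewrite /q; nra.
pose F x := J (x + gam *: S x).
have HF : forall x y, `|F x - F y| <= q * `|x - y|.
  move=> x y; apply: (le_trans (Jlip _ _)).
  have e : x + gam *: S x - (y + gam *: S y) = (x - y) + gam *: S (x - y).
    by rewrite (SB Slin) scalerBr opprD addrACA.
  rewrite e; move: (x - y) => h.
  rewrite -(@ler_pXn2r _ 2) // ?nnegrE ?mulr_ge0 //.
  rewrite exprMn -!(ipxx hip) !(ipDl hip) !(ipDr hip) !(ipZl hip) !(ipZr hip).
  rewrite (ipC hip h (S h)).
  have s1 := Sstr h; have s2 := HL1 h.
  have s3 : `|S h| ^+ 2 <= L1 ^+ 2 * `|h| ^+ 2.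
    by rewrite -exprMn ler_pXn2r // ?nnegrE ?mulr_ge0 // ltW.
  rewrite !(ipxx hip).
  have eg1 : gam * lambda = kappa ^+ 2.
    by rewrite /gam /kappa; field; rewrite gt_eqF.
  have eg2 : gam ^+ 2 * L1 ^+ 2 = kappa ^+ 2.
    by rewrite /gam /kappa; field; rewrite gt_eqF.
  have i1 : gam * ip (S h) h <= - kappa ^+ 2 * `|h| ^+ 2.
    rewrite -eg1; have := ler_wpM2l (ltW gam0) s1; rewrite mulr0 mulrDr; nra.
  have i2 : gam * (gam * `|S h| ^+ 2) <= kappa ^+ 2 * `|h| ^+ 2.
    rewrite -eg2 mulrA -expr2 -mulrA; apply: ler_wpM2l => //; exact: sqr_ge0.
  have i3 : 1 - kappa ^+ 2 <= q ^+ 2 by rewrite /q; nra.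
  have H0 : 0 <= `|h| ^+ 2 by exact: sqr_ge0.
  move: i1 i2 i3 H0; set A := ip (S h) h; set B := `|S h| ^+ 2; set H := `|h| ^+ 2.
  set k2 := kappa ^+ 2; set q2 := q ^+ 2.
  clearbody A B H k2 q2 => i1 i2 i3 H0; nra.
have ctr : is_contraction (totalfun_ [set: Y] F).
  exists (NngNum q0); split => //.
  move=> [x1 x2] _ /=; exact: HF.
have [x _ hx] := banach_fixed_point ctr closedT (ex_intro _ 0 I).
have hx' : J (x + gam *: S x) = x by exact: esym hx.
have Mx : M x (S x).
  have := HJ (x + gam *: S x); rewrite hx' addrAC subrr add0r scalerA mulVf ?gt_eqF //.
  by rewrite scale1r.
exists (S x); split; first by rewrite ST.
move=> y' My'.
have := Mmono _ _ _ _ Mx My'.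
rewrite -{1}(ST x) -(SB Tlin) (ipC hip) => h0.
apply/eqP; rewrite -subr_eq0; apply/eqP.
have := Hineq (S x - y').
move: h0; set h := S x - y' => h0 h1.
have : `|T h| ^+ 2 <= 0.
  have : 0 <= lambda * `|T h| ^+ 2 by nra.
  move: h0 h1; set a := ip h (T h); set b := `|T h| ^+ 2; clearbody a b => *; nra.
have nn : 0 <= `|T h| ^+ 2 by exact: sqr_ge0.
move=> hle; have : `|T h| ^+ 2 = 0 by apply/eqP; rewrite eq_le hle nn.
move/eqP; rewrite sqrf_eq0 normr_eq0 => /eqP Th0.
by rewrite -(TS h) Th0 (S0 Slin).
Qed.
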